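(* Let $\mathcal{M}$ be an ergodic (not necessarily reversible) Markov chain on a finite state space, and let $\widetilde{\mathcal{M}}$ be its continuization. Then $$\Phi(\mathcal{M})\ \ge\ \frac{\frac12-\frac{1}{2e}}{\tau(\widetilde{\mathcal{M}},\frac{1}{2e})}.$$
   Context: A (discrete-time) Markov chain on a finite state space $\Omega$ with transition matrix $P$ is ergodic if irreducible and aperiodic; it then has a unique stationary distribution $\pi>0$. Variation distance: $\|\theta_1-\theta_2\|=\frac12\sum_i|\theta_1(i)-\theta_2(i)|$. Continuization: with $Q=P-I$, the continuous-time chain $\widetilde{\mathcal{M}}$ has time-$t$ transition matrix $\widetilde P^t=\exp(Qt)$ (matrix exponential), $t\ge0$ real. Its mixing time from $x$ is $\tau_x(\widetilde{\mathcal{M}},\varepsilon)=\inf\{t>0: \|v_x\exp(Qt')-\pi\|\le\varepsilon \text{ for all real } t'\ge t\}$, where $v_x$ is the row unit vector at $x$, and $\tau(\widetilde{\mathcal{M}},\varepsilon)=\max_x\tau_x(\widetilde{\mathcal{M}},\varepsilon)$. Conductance: for $S\subset\Omega$ with $0<\pi(S)<1$ and $\bar S=\Omega\setminus S$, $\Phi_S(\mathcal{M})=\dfrac{\sum_{i\in S}\sum_{j\in\bar S}\pi(i)P(i,j)+\sum_{i\in\bar S}\sum_{j\in S}\pi(i)P(i,j)}{2\pi(S)\pi(\bar S)}$, and $\Phi(\mathcal{M})=\min_S\Phi_S(\mathcal{M})$ over all such $S$. *)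

(* Defs.v *)
From HB Require Import structures.
From mathcomp Require Import all_boot all_order all_algebra.
From mathcomp Require Import all_classical all_reals all_analysis.
Set Implicit Arguments. Unset Strict Implicit. Unset Printing Implicit Defensive.
Import Order.TTheory GRing.Theory Num.Theory.
Local Open Scope ring_scope.
Local Open Scope classical_set_scope.

Section MarkovDefs.
Variables (R : realType) (n : nat).

Definition stochastic (P : 'M[R]_n) : Prop :=
  (forall i j, 0 <= P i j) /\ (forall i, \sum_j P i j = 1).

Definition irreducible (P : 'M[R]_n) : Prop :=
  forall i j, exists k : nat, 0 < (P ^+ k) i j.

(* period of i is gcd {k >= 1 : P^k(i,i) > 0}; aperiodic: every period is 1,
   i.e. the only common divisor of all return times is 1 *)
Definition aperiodic (P : 'M[R]_n) : Prop :=
  forall i, forall d : nat,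
    (forall k : nat, (0 < k)%N -> 0 < (P ^+ k) i i -> (d %| k)%N) -> d = 1%N.

Definition ergodic (P : 'M[R]_n) : Prop :=
  stochastic P /\ irreducible P /\ aperiodic P.

Definition stationary (P : 'M[R]_n) (pi : 'rV[R]_n) : Prop :=
  (forall i, 0 <= pi 0 i) /\ \sum_i pi 0 i = 1 /\ pi *m P = pi.

Definition expm (A : 'M[R]_n) : 'M[R]_n :=
  \matrix_(i, j) limn (fun N => \sum_(k < N) (A ^+ k) i j / (k`!)%:R).

(* continuization: time-t transition matrix exp(Q t), Q = P - I *)
Definition ctm (P : 'M[R]_n) (t : R) : 'M[R]_n := expm (t *: (P - 1%:M)).

Definition vdist (a b : 'rV[R]_n) : R := 2^-1 * \sum_i `|a 0 i - b 0 i|.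

Definition unitv (x : 'I_n) : 'rV[R]_n := delta_mx 0 x.

Definition mixtime_from (P : 'M[R]_n) (pi : 'rV[R]_n) (eps : R) (x : 'I_n) : R :=
  inf [set t : R | 0 < t /\
        forall t' : R, t <= t' -> vdist (unitv x *m ctm P t') pi <= eps].

Definition mixtime (P : 'M[R]_n) (pi : 'rV[R]_n) (eps : R) : R :=
  \big[Order.max/0]_(x < n) mixtime_from P pi eps x.

Definition piS (pi : 'rV[R]_n) (S : {set 'I_n}) : R := \sum_(i in S) pi 0 i.

Definition conductanceS (P : 'M[R]_n) (pi : 'rV[R]_n) (S : {set 'I_n}) : R :=
  (\sum_(i in S) \sum_(j in ~: S) pi 0 i * P i j
   + \sum_(i in ~: S) \sum_(j in S) pi 0 i * P i j)
  / (2 * piS pi S * piS pi (~: S)).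

End MarkovDefs.

(* Main.v *)
Require Import Defs.
From HB Require Import structures.
From mathcomp Require Import all_boot all_order all_algebra.
From mathcomp Require Import all_classical all_reals all_analysis.
From mathcomp Require Import ring lra zify.
Set Implicit Arguments. Unset Strict Implicit. Unset Printing Implicit Defensive.
Import Order.TTheory GRing.Theory Num.Theory numFieldNormedType.Exports.
Local Open Scope ring_scope.
Local Open Scope classical_set_scope.

Section Aux.
Variable R : realType.

Definition ec (x : R) (k : nat) : R := x ^+ k / k`!%:R.

Lemma ec_cvg (x : R) : (\sum_(k < N) ec x k) @[N --> \oo] --> expR x.
Proof.
have := is_cvg_series_exp_coeff x.
rewrite /expR /series /=.
by under eq_fun do rewrite big_mkord.
Qed.

Lemma ec_ge0 x k : 0 <= x -> 0 <= ec x k.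
Proof. by move=> hx; rewrite /ec divr_ge0 // exprn_ge0. Qed.

Lemma ec_norm x k : `|ec x k| = ec `|x| k.
Proof. by rewrite /ec normrM normrX normfV normr_nat. Qed.

Lemma cvg_big (I : Type) (r : seq I) (f : I -> nat -> R) (l : I -> R) :
  (forall i, f i n @[n --> \oo] --> l i) ->
  (\sum_(i <- r) f i N) @[N --> \oo] --> \sum_(i <- r) l i.
Proof.
move=> H; elim: r => [|a r IH].
  rewrite big_nil; under eq_fun do rewrite big_nil. exact: cvg_cst.
rewrite big_cons; under eq_fun do rewrite big_cons.
exact: cvgD.
Qed.

Lemma binR k i : (i <= k)%N ->
  'C(k, i)%:R / k`!%:R = ((k - i)`!%:R)^-1 * (i`!%:R)^-1 :> R.
Proof.
move=> hik; rewrite -(bin_fact hik) !natrM.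
have h1 : (i`!%:R : R) != 0 by rewrite pnatr_eq0 -lt0n fact_gt0.
have h2 : ((k - i)`!%:R : R) != 0 by rewrite pnatr_eq0 -lt0n fact_gt0.
have h3 : ('C(k, i)%:R : R) != 0 by rewrite pnatr_eq0 -lt0n bin_gt0.
by field; rewrite h1 h2 h3.
Qed.

Lemma cauchy_reidx (g : nat -> nat -> R) N :
  \sum_(k < N) \sum_(i < k.+1) g i (k - i)%N =
  \sum_(i < N) \sum_(j < N - i) g i j.
Proof.
elim: N => [|N IH]; first by rewrite !big_ord0.
rewrite big_ord_recr /= IH.
have -> : \sum_(i < N.+1) \sum_(j < N.+1 - i) g i j =
          \sum_(i < N.+1) (\sum_(j < N - i) g i j + g i (N - i)%N).
  apply: eq_bigr => i _; rewrite subSn; last by rewrite -ltnS.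
  by rewrite big_ord_recr.
rewrite big_split /=; congr (_ + _).
by rewrite big_ord_recr /= subnn big_ord0 addr0.
Qed.

Definition Cs (a b : nat -> R) N := \sum_(k < N) \sum_(i < k.+1) a (k - i)%N * b i.
Definition Ds (a b : nat -> R) N :=
  \sum_(i < N) \sum_(j < N | ~~ (j < N - i)%N) a j * b i.

Lemma CsDs (a b : nat -> R) N :
  (\sum_(j < N) a j) * (\sum_(i < N) b i) = Cs a b N + Ds a b N.
Proof.
rewrite /Cs (cauchy_reidx (fun i j => a j * b i)) /Ds -big_split /=.
rewrite mulrC big_distrl /=; apply: eq_bigr => i _.
rewrite big_distrr /= (big_ord_widen N (fun j => a j * b i)) ?leq_subr //.
rewrite (bigID (fun j : 'I_N => (j < N - i)%N)) /=.
by congr (_ + _); apply: eq_bigr => j _; rewrite mulrC.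
Qed.

Lemma Ds_norm (a b al be : nat -> R) N :
  (forall k, `|a k| <= al k) -> (forall k, `|b k| <= be k) ->
  `|Ds a b N| <= Ds al be N.
Proof.
move=> ha hb; rewrite /Ds.
apply: (le_trans (ler_norm_sum _ _ _)); apply: ler_sum => i _.
apply: (le_trans (ler_norm_sum _ _ _)); apply: ler_sum => j _.
rewrite normrM; apply: ler_pM => //.
Qed.

Lemma Cs_ec x y N : Cs (ec x) (ec y) N = \sum_(k < N) ec (x + y) k.
Proof.
rewrite /Cs; apply: eq_bigr => k _.
rewrite /ec exprDn mulr_suml; apply: eq_bigr => i _.
rewrite -[_ *+ 'C(k, i)]mulr_natr -[RHS]mulrA binR; last by rewrite -ltnS ltn_ord.
by ring.
Qed.


Lemma Ds_ec x y N :
  Ds (ec x) (ec y) N =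
  (\sum_(k < N) ec x k) * (\sum_(k < N) ec y k) - \sum_(k < N) ec (x + y) k.
Proof. by rewrite CsDs Cs_ec addrC addKr. Qed.

Lemma cauchy_cvg (a b : nat -> R) (x y A B : R) :
  0 <= x -> 0 <= y ->
  (forall k, `|a k| <= ec x k) -> (forall k, `|b k| <= ec y k) ->
  (\sum_(k < N) a k) @[N --> \oo] --> A ->
  (\sum_(k < N) b k) @[N --> \oo] --> B ->
  Cs a b N @[N --> \oo] --> A * B.
Proof.
move=> hx hy ha hb hA hB.
have hD : Ds (ec x) (ec y) N @[N --> \oo] --> 0.
  rewrite (_ : (fun N => _) = (fun N => (\sum_(k < N) ec x k) * (\sum_(k < N) ec y k)
      - \sum_(k < N) ec (x + y) k)); last by apply: funext => N; rewrite Ds_ec.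
  have h : (\sum_(k < N) ec x k) * (\sum_(k < N) ec y k)
      - \sum_(k < N) ec (x + y) k @[N --> \oo] --> expR x * expR y - expR (x + y).
    apply: cvgB; last exact: ec_cvg.
    by apply: cvgM; exact: ec_cvg.
  by rewrite expRD subrr in h.
have hDab : Ds a b N @[N --> \oo] --> 0.
  apply: (@squeeze_cvgr _ _ _ _ (fun N => - Ds (ec x) (ec y) N)
                                (fun N => Ds (ec x) (ec y) N)); last exact: hD.
    near=> N; rewrite -ler_norml; exact: Ds_norm.
  by have h := cvgN hD; rewrite oppr0 in h; exact: h.
rewrite (_ : (fun N => _) = (fun N => (\sum_(k < N) a k) * (\sum_(k < N) b k)
      - Ds a b N)); last by apply: funext => N; rewrite CsDs addrK.
rewrite -[A * B]subr0; apply: cvgB => //.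
exact: cvgM.
Unshelve. all: end_near.
Qed.


Lemma abs_cvg (a : nat -> R) x : (forall k, `|a k| <= ec x k) ->
  exists G : R, (\sum_(k < N) a k) @[N --> \oo] --> G.
Proof.
move=> ha.
have h : cvgn (series a).
  apply: normed_cvg.
  apply: (@series_le_cvg _ _ (ec x)) => //.
  - by move=> k /=.
  - by move=> k; apply: le_trans (ha k).
  - have -> : ec x = exp_coeff x by apply: funext => k.
    exact: is_cvg_series_exp_coeff.
exists (limn (series a)).
move: h; rewrite /series /=.
by under eq_fun do rewrite big_mkord.
Qed.

End Aux.


Section Mx.
Variables (R : realType) (n : nat).
Implicit Types (M : 'M[R]_n).

Lemma mxpowZ (c : R) M k : (c *: M) ^+ k = c ^+ k *: M ^+ k.
Proof.
elim: k => [|k IH]; first by rewrite !expr0 scale1r.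
by rewrite !exprSr IH -!mulmxE -scalemxAl -scalemxAr scalerA.
Qed.

Lemma scalar_pow (d : R) k : (d%:M : 'M[R]_n) ^+ k = (d ^+ k)%:M.
Proof.
elim: k => [|k IH]; first by rewrite !expr0.
by rewrite !exprSr IH -mulmxE -scalar_mxM.
Qed.

Definition msum M := \sum_i \sum_j `|M i j|.

Lemma msum_ge0 M : 0 <= msum M.
Proof. by apply: sumr_ge0 => i _; apply: sumr_ge0. Qed.

Lemma mxpow_bound M k i j : `|(M ^+ k) i j| <= msum M ^+ k.
Proof.
elim: k i j => [|k IH] i j.
  by rewrite expr0 mxE; case: (i == j); rewrite ?normr1 ?normr0.
rewrite exprSr -mulmxE mxE exprSr.
apply: (le_trans (ler_norm_sum _ _ _)).
apply: (@le_trans _ _ (\sum_l msum M ^+ k * `|M l j|)).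
  apply: ler_sum => l _; rewrite normrM; apply: ler_wpM2r => //.
rewrite -mulr_sumr; apply: ler_wpM2l; first exact: exprn_ge0 (msum_ge0 M).
apply: ler_sum => l _.
rewrite (bigD1 j) //= lerDl; apply: sumr_ge0 => *; exact: normr_ge0.
Qed.

Lemma expm_pois M (c : R) i j :
  exists G : R, (\sum_(k < N) c ^+ k / k`!%:R * (M ^+ k) i j) @[N --> \oo] --> G
    /\ expm (c *: (M - 1%:M)) i j = G * expR (- c).
Proof.
set a := fun k => c ^+ k / k`!%:R * (M ^+ k) i j.
have ha : forall k, `|a k| <= ec (`|c| * msum M) k.
  move=> k; rewrite /a /ec normrM normrM normfV normr_nat normrX exprMn.
  rewrite [leRHS]mulrAC; apply: ler_wpM2l; last exact: mxpow_bound.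
  by rewrite divr_ge0 // exprn_ge0.
have [G hG] := abs_cvg ha.
exists G; split => //.
have hb : forall k, `|ec (- c) k| <= ec `|c| k by move=> k; rewrite ec_norm normrN.
have hC := cauchy_cvg (mulr_ge0 (normr_ge0 c) (msum_ge0 M)) (normr_ge0 c) ha hb hG
  (@ec_cvg R (- c)).
rewrite /expm mxE.
rewrite (_ : (fun N => \sum_(k < N) ((c *: (M - 1%:M)) ^+ k) i j / k`!%:R)
   = Cs a (ec (- c))); first exact: cvg_lim hC.
apply: funext => N; rewrite /Cs; apply: eq_bigr => k _.
have eA : c *: (M - 1%:M) = c *: M + (-c)%:M.
  by rewrite scalerBr -scaleNr scalemx1.
have hcomm : GRing.comm (c *: M) (-c)%:M.
  by rewrite /GRing.comm -mulmxE scalar_mxC.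
rewrite eA (exprDn_comm _ hcomm) summxE mulr_suml; apply: eq_bigr => l _.
rewrite mulmxnE scalar_pow -mulmxE mul_mx_scalar mxpowZ !mxE.
rewrite -[_ *+ 'C(k, l)]mulr_natr -mulrA binR; last by rewrite -ltnS ltn_ord.
rewrite /a /ec; ring.
Qed.

End Mx.

Section Gen.
Variable R : realType.

Lemma cvg_bigP (I : Type) (r : seq I) (Pr : pred I) (f : I -> nat -> R) (l : I -> R) :
  (forall i, f i n @[n --> \oo] --> l i) ->
  (\sum_(i <- r | Pr i) f i N) @[N --> \oo] --> \sum_(i <- r | Pr i) l i.
Proof.
move=> H; rewrite big_mkcond; under eq_fun do rewrite big_mkcond.
apply: cvg_big => i; case: (Pr i) => //; exact: cvg_cst.
Qed.

Lemma cvg_le (u : nat -> R) (L B : R) :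
  u @ \oo --> L -> (forall N, u N <= B) -> L <= B.
Proof.
move=> h hB; rewrite -(cvg_lim _ h) //; apply: limr_le; first exact: cvgP h.
by near=> N; apply: hB.
Unshelve. all: end_near.
Qed.

Lemma cvg_uniq (u : nat -> R) (L1 L2 : R) :
  u @ \oo --> L1 -> u @ \oo --> L2 -> L1 = L2.
Proof. by move=> h1 h2; rewrite -(cvg_lim _ h1) // -(cvg_lim _ h2). Qed.

Lemma ec_partial_le (x : R) N : 0 <= x -> \sum_(k < N) ec x k <= expR x.
Proof.
move=> hx.
have hom : {homo series (exp_coeff x) : a b / (a <= b)%N >-> a <= b}.
  move=> a b hab; rewrite /series /=.
  by apply: (@nondecreasing_series _ _ predT 0) => // k _ _; exact: exp_coeff_ge0.
have h := nondecreasing_cvgn_le hom (is_cvg_series_exp_coeff x) N.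
by rewrite /series /= big_mkord in h.
Qed.

Lemma ec_shift (t : R) N :
  \sum_(k < N.+1) ec t k * k%:R = t * \sum_(k < N) ec t k.
Proof.
rewrite big_ord_recl /= mulr0 add0r mulr_sumr; apply: eq_bigr => k _.
rewrite /ec /bump /= factS natrM exprS.
have h1 : (k`!%:R : R) != 0 by rewrite pnatr_eq0 -lt0n fact_gt0.
have h2 : (k.+1%:R : R) != 0 by rewrite pnatr_eq0.
rewrite -[(1 + k)%N]/(k.+1); field.
by rewrite h1 addrC natr1 h2.
Qed.

End Gen.

Section Mx2.
Variables (R : realType) (n : nat).

Lemma expm_pois_v (M : 'M[R]_n) (c : R) (v : 'rV[R]_n) j :
  exists G : R, (\sum_(k < N) c ^+ k / k`!%:R * (v *m M ^+ k) 0 j) @[N --> \oo] --> G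
    /\ (v *m expm (c *: (M - 1%:M))) 0 j = G * expR (- c).
Proof.
have /choice [Gf hGf] := fun i => expm_pois M c i j.
exists (\sum_i v 0 i * Gf i); split.
  rewrite (_ : (fun N => _) = (fun N => \sum_i v 0 i *
      \sum_(k < N) c ^+ k / k`!%:R * (M ^+ k) i j)); last first.
    apply: funext => N; under eq_bigr do rewrite mxE mulr_sumr.
    rewrite exchange_big /=; apply: eq_bigr => i _.
    rewrite mulr_sumr; apply: eq_bigr => k _; ring.
  apply: cvg_big => i; apply: cvgM; [exact: cvg_cst | exact: (hGf i).1].
rewrite mxE mulr_suml; apply: eq_bigr => i _.
by rewrite (hGf i).2 mulrA.
Qed.

End Mx2.

Section Stoch.
Variables (R : realType) (n : nat).
Implicit Types (K : 'M[R]_n) (v w : 'rV[R]_n).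

Definition stoch K := (forall i j, 0 <= K i j) /\ (forall i, \sum_j K i j = 1).

Lemma vsum K v : stoch K -> \sum_j (v *m K) 0 j = \sum_i v 0 i.
Proof.
move=> [_ h1]; under eq_bigr do rewrite mxE.
rewrite exchange_big /=; apply: eq_bigr => i _.
by rewrite -mulr_sumr h1 mulr1.
Qed.

Lemma vnn K v : stoch K -> (forall i, 0 <= v 0 i) -> forall j, 0 <= (v *m K) 0 j.
Proof.
move=> [h0 _] hv j; rewrite mxE; apply: sumr_ge0 => i _; exact: mulr_ge0.
Qed.

Lemma vmono K v w : stoch K -> (forall i, v 0 i <= w 0 i) ->
  forall j, (v *m K) 0 j <= (w *m K) 0 j.
Proof.
move=> [h0 _] hv j; rewrite !mxE; apply: ler_sum => i _; exact: ler_wpM2r.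
Qed.

Lemma stoch_mul K1 K2 : stoch K1 -> stoch K2 -> stoch (K1 *m K2).
Proof.
move=> [a0 a1] [b0 b1]; split.
  move=> i j; rewrite mxE; apply: sumr_ge0 => l _; exact: mulr_ge0.
move=> i; under eq_bigr do rewrite mxE.
rewrite exchange_big /=.
rewrite -(a1 i); apply: eq_bigr => l _.
by rewrite -mulr_sumr b1 mulr1.
Qed.

Lemma stoch1 : stoch 1%:M.
Proof.
split; first by move=> i j; rewrite mxE; case: (i == j).
move=> i; rewrite (bigD1 i) //= mxE eqxx big1 ?addr0 // => j hj.
by rewrite mxE eq_sym (negbTE hj).
Qed.

Lemma stoch_pow K k : stoch K -> stoch (K ^+ k).
Proof.
move=> hK; elim: k => [|k IH]; first by rewrite expr0; exact: stoch1.
by rewrite exprSr -mulmxE; apply: stoch_mul.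
Qed.

Lemma contract K (d : R) w : (forall i j, d <= K i j) ->
  (forall i, \sum_j K i j = 1) -> \sum_i w 0 i = 0 ->
  \sum_j `|(w *m K) 0 j| <= (1 - n%:R * d) * \sum_i `|w 0 i|.
Proof.
move=> hd h1 hw.
have e : forall j, (w *m K) 0 j = \sum_i w 0 i * (K i j - d).
  move=> j; rewrite mxE.
  under [RHS]eq_bigr do rewrite mulrBr.
  by rewrite sumrB -mulr_suml hw mul0r subr0.
apply: (@le_trans _ _ (\sum_j \sum_i `|w 0 i| * (K i j - d))).
  apply: ler_sum => j _; rewrite e.
  apply: (le_trans (ler_norm_sum _ _ _)); apply: ler_sum => i _.
  by rewrite normrM (ger0_norm (_ : 0 <= K i j - d)) // subr_ge0.
rewrite exchange_big /= mulr_sumr; apply: ler_sum => i _.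
rewrite -mulr_sumr mulrC sumrB h1 sumr_const card_ord mulr_natl.
by [].
Qed.

End Stoch.

Section Cond.
Variables (R : realType) (n : nat) (P : 'M[R]_n) (pi : 'rV[R]_n).
Hypotheses (hP : stoch P) (hpi0 : forall i, 0 <= pi 0 i)
  (hpi1 : \sum_i pi 0 i = 1) (hpiP : pi *m P = pi).
Variable T : {set 'I_n}.
Hypothesis hT : 0 < piS pi T.

Definition mu0 : 'rV[R]_n := \row_i (if i \in T then pi 0 i / piS pi T else 0).
Definition Fl := \sum_(i in T) \sum_(j in ~: T) pi 0 i * P i j.
Definition nu k := mu0 *m P ^+ k.

Lemma Fl_ge0 : 0 <= Fl.
Proof.
apply: sumr_ge0 => i _; apply: sumr_ge0 => j _; apply: mulr_ge0 => //.
exact: hP.1.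
Qed.

Lemma mu0_nn i : 0 <= mu0 0 i.
Proof. rewrite mxE; case: ifP => // _; apply: divr_ge0 => //; exact: ltW. Qed.

Lemma mu0_le i : mu0 0 i <= (piS pi T)^-1 * pi 0 i.
Proof.
rewrite mxE mulrC; case: ifP => // _; apply: mulr_ge0 => //; rewrite invr_ge0 ltW //.
Qed.

Lemma mu0_sum : \sum_i mu0 0 i = 1.
Proof.
under eq_bigr do rewrite mxE.
by rewrite -big_mkcond /= -mulr_suml divff // gt_eqF.
Qed.

Lemma nu_succ k : nu k.+1 = nu k *m P.
Proof. by rewrite /nu exprSr -mulmxE mulmxA. Qed.

Lemma nu_nn k j : 0 <= nu k 0 j.
Proof. apply: vnn => //; [exact: stoch_pow | exact: mu0_nn]. Qed.

Lemma nu_sum k : \sum_j nu k 0 j = 1.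
Proof. by rewrite vsum ?mu0_sum //; exact: stoch_pow. Qed.

Lemma nu_le k j : nu k 0 j <= (piS pi T)^-1 * pi 0 j.
Proof.
elim: k j => [|k IH] j; first by rewrite /nu expr0 mulmx1; exact: mu0_le.
rewrite nu_succ.
apply: (le_trans (vmono hP (w := (piS pi T)^-1 *: pi) _ j)).
  by move=> i; rewrite [X in _ <= X]mxE; exact: IH.
by rewrite -scalemxAl hpiP mxE.
Qed.

Lemma Pout_le1 i : \sum_(j in ~: T) P i j <= 1.
Proof.
rewrite -(hP.2 i) big_mkcond /=; apply: ler_sum => j _.
by case: ifP => // _; exact: hP.1.
Qed.

Lemma nu_out k : \sum_(j in ~: T) nu k 0 j <= k%:R * (Fl / piS pi T).
Proof.
elim: k => [|k IH].
  rewrite mul0r; apply: le_trans (_ : \sum_(j in ~: T) 0 <= 0); last by rewrite big1.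
  apply: ler_sum => j; rewrite /nu expr0 mulmx1 mxE !inE; by case: ifP.
rewrite -natr1 mulrDl mul1r addrC.
rewrite nu_succ.
under eq_bigr do rewrite mxE.
rewrite exchange_big /= (bigID (fun i => i \in T)) /=.
apply: lerD.
  rewrite /Fl mulr_suml; apply: ler_sum => i iT.
  rewrite mulr_suml; apply: ler_sum => j _.
  rewrite mulrAC; apply: ler_wpM2r; first exact: hP.1.
  by rewrite mulrC; exact: nu_le.
apply: le_trans IH; rewrite big_mkcond [leRHS]big_mkcond /=; apply: ler_sum => i _.
rewrite !inE; case: ifP => _ //.
rewrite -mulr_sumr -[leRHS]mulr1; apply: ler_wpM2l; first exact: nu_nn.
exact: Pout_le1.
Qed.


Lemma mut_props t : 0 <= t ->
  \sum_j (mu0 *m ctm P t) 0 j = 1 /\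
  \sum_(j in ~: T) (mu0 *m ctm P t) 0 j <= t * (Fl / piS pi T).
Proof.
move=> ht.
have /choice [G hG] := fun j => expm_pois_v P t mu0 j.
have eC : forall j, (mu0 *m ctm P t) 0 j = G j * expR (- t).
  by move=> j; rewrite /ctm (hG j).2.
have eS : forall (A : {pred 'I_n}) N,
    \sum_(j in A) \sum_(k < N) t ^+ k / k`!%:R * (mu0 *m P ^+ k) 0 j =
    \sum_(k < N) ec t k * \sum_(j in A) nu k 0 j.
  move=> A N; rewrite exchange_big /=; apply: eq_bigr => k _.
  by rewrite mulr_sumr.
have cS : forall (A : {pred 'I_n}),
    (\sum_(k < N) ec t k * \sum_(j in A) nu k 0 j) @[N --> \oo] -->
    \sum_(j in A) G j.
  move=> A; rewrite (_ : (fun N => _) = (fun N => \sum_(j in A)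
     \sum_(k < N) t ^+ k / k`!%:R * (mu0 *m P ^+ k) 0 j)); last first.
    by apply: funext => N; rewrite eS.
  by apply: cvg_bigP => j; exact: (hG j).1.
split.
  under eq_bigr do rewrite eC.
  rewrite -mulr_suml.
  have h1 := cS predT.
  rewrite (_ : (fun N => _) = (fun N => \sum_(k < N) ec t k)) in h1; last first.
    apply: funext => N; apply: eq_bigr => k _.
    by rewrite (eq_bigl (fun j => true)) // nu_sum mulr1.
  rewrite (eq_bigl (fun j => true)) // in h1.
  by rewrite (cvg_uniq h1 (@ec_cvg R t)) expRxMexpNx_1.
under eq_bigr do rewrite eC.
rewrite -mulr_suml.
have hb : \sum_(j in ~: T) G j <= t * expR t * (Fl / piS pi T).
  apply: (cvg_le (cS (mem (~: T)))) => N.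
  apply: (@le_trans _ _ (\sum_(k < N) ec t k * k%:R * (Fl / piS pi T))).
    apply: ler_sum => k _; rewrite -mulrA; apply: ler_wpM2l; first exact: ec_ge0.
    exact: nu_out.
  rewrite -mulr_suml; apply: ler_wpM2r.
    by apply: divr_ge0; [exact: Fl_ge0 | exact: ltW].
  apply: (@le_trans _ _ (\sum_(k < N.+1) ec t k * k%:R)).
    rewrite big_ord_recr /= lerDl; apply: mulr_ge0; [exact: ec_ge0 | exact: ler0n].
  rewrite ec_shift; apply: ler_wpM2l => //; exact: ec_partial_le.
apply: (le_trans (ler_wpM2r (expR_ge0 _) hb)).
have -> : t * expR t * (Fl / piS pi T) * expR (- t) = t * (Fl / piS pi T) * (expR t * expR (- t)) by ring.
by rewrite expRxMexpNx_1 mulr1.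
Qed.

End Cond.

Section Conv.
Variables (R : realType) (n : nat) (P : 'M[R]_n) (pi : 'rV[R]_n).
Hypotheses (hP : stoch P) (hpi0 : forall i, 0 <= pi 0 i)
  (hpi1 : \sum_i pi 0 i = 1) (hpiP : pi *m P = pi)
  (hirr : forall i j, exists k : nat, 0 < (P ^+ k) i j).

Definition Lz : 'M[R]_n := 2^-1 *: (1%:M + P).

Lemma Lz_stoch : stoch Lz.
Proof.
split.
  move=> i j; rewrite !mxE; apply: mulr_ge0 => //; apply: addr_ge0.
    by case: (i == j).
  exact: hP.1.
move=> i; under eq_bigr do rewrite !mxE.
rewrite -mulr_sumr big_split /=.
rewrite hP.2 (bigD1 i) //= eqxx big1 ?addr0; last first.
  by move=> j hj; rewrite eq_sym (negbTE hj).
by rewrite mulVf // pnatr_eq0.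
Qed.

Lemma piLz : pi *m Lz = pi.
Proof.
rewrite /Lz -scalemxAr mulmxDr mulmx1 hpiP.
apply/matrixP => i j; rewrite !mxE; by field.
Qed.

Lemma piLzn k : pi *m Lz ^+ k = pi.
Proof.
elim: k => [|k IH]; first by rewrite expr0 mulmx1.
by rewrite exprSr -mulmxE mulmxA IH piLz.
Qed.

Lemma ctm_Lz t : ctm P t = expm ((2 * t) *: (Lz - 1%:M)).
Proof.
rewrite /ctm; congr expm; apply/matrixP => i j; rewrite !mxE; by field.
Qed.

Lemma Ppow_ge0 k i j : 0 <= (P ^+ k) i j.
Proof. exact: (stoch_pow k hP).1. Qed.

Lemma Lpow_ge m k i j : (k <= m)%N -> 2^-1 ^+ m * (P ^+ k) i j <= (Lz ^+ m) i j.
Proof.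
move=> hkm; rewrite /Lz mxpowZ mxE; apply: ler_wpM2l.
  by apply: exprn_ge0; rewrite invr_ge0.
have hc : GRing.comm (1%:M : 'M[R]_n) P by apply: commr_sym; exact: commr1.
rewrite (exprDn_comm _ hc) summxE.
have hk : (k < m.+1)%N by [].
rewrite (bigD1 (Ordinal hk)) //= -[X in X <= _]addr0.
apply: lerD.
  rewrite mulmxnE (_ : (1%:M : 'M[R]_n) = 1) // expr1n mul1r.
  rewrite -mulr_natr -[X in X <= _]mulr1; apply: ler_wpM2l; first exact: Ppow_ge0.
  by rewrite ler1n bin_gt0.
apply: sumr_ge0 => l _; rewrite mulmxnE; apply: mulrn_wge0.
rewrite (_ : (1%:M : 'M[R]_n) = 1) // expr1n mul1r; exact: Ppow_ge0.
Qed.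


Lemma doeblin : exists m : nat, exists d : R, 0 < d /\ forall i j, d <= (Lz ^+ m) i j.
Proof.
have /choice [Kf hK] : forall p : 'I_n * 'I_n, exists k, 0 < (P ^+ k) p.1 p.2.
  by move=> p; exact: hirr.
exists (\max_p Kf p).
exists (\big[Order.min/1]_(p : 'I_n * 'I_n) (Lz ^+ (\max_p Kf p)) p.1 p.2).
split.
  apply: lt_bigmin => // p _.
  apply: lt_le_trans (Lpow_ge _ _ (leq_bigmax p)).
  apply: mulr_gt0 => //; apply: exprn_gt0; by rewrite invr_gt0.
by move=> i j; exact: (bigmin_le _ (i, j) (fun p : 'I_n * 'I_n => (Lz ^+ _) p.1 p.2)).
Qed.

Section Decay.
Variable v : 'rV[R]_n.
Hypotheses (hv0 : forall i, 0 <= v 0 i) (hv1 : \sum_i v 0 i = 1).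

Definition rr k := \sum_j `|(v *m Lz ^+ k - pi) 0 j|.

Lemma wsum k : \sum_j (v *m Lz ^+ k - pi) 0 j = 0.
Proof.
have h := vsum v (stoch_pow k Lz_stoch).
set A := v *m Lz ^+ k in h *.
clearbody A; under eq_bigr do rewrite !mxE.
by rewrite sumrB h hv1 hpi1 subrr.
Qed.

Lemma wstep k d : v *m Lz ^+ (k + d) - pi = (v *m Lz ^+ k - pi) *m Lz ^+ d.
Proof. by rewrite mulmxBl piLzn -mulmxA mulmxE -exprD. Qed.

Lemma rr_step k d (e : R) : (forall i j, e <= (Lz ^+ d) i j) ->
  rr (k + d) <= (1 - n%:R * e) * rr k.
Proof.
move=> he; rewrite /rr wstep; apply: contract => //.
  exact: (stoch_pow d Lz_stoch).2.
exact: wsum.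
Qed.

Lemma rr_mono k d : rr (k + d) <= rr k.
Proof.
elim: d => [|d IH]; first by rewrite addn0.
apply: le_trans IH; rewrite addnS -addn1.
have := @rr_step (k + d) 1 0; rewrite mulr0 subr0 mul1r; apply.
by move=> i j; rewrite expr1; exact: Lz_stoch.1.
Qed.

Lemma rr0 : rr 0 <= 2.
Proof.
rewrite /rr; apply: (@le_trans _ _ (\sum_j (v 0 j + pi 0 j))).
  apply: ler_sum => j _; rewrite expr0 mulmx1 !mxE.
  apply: (le_trans (ler_normB _ _)).
  by rewrite !ger0_norm.
by rewrite big_split /= hv1 hpi1.
Qed.

Lemma rr_le2 k : rr k <= 2.
Proof. by apply: le_trans rr0; have := rr_mono 0 k; rewrite add0n. Qed.

End Decay.


Lemma decay_eps (v : 'rV[R]_n) : (forall i, 0 <= v 0 i) -> \sum_i v 0 i = 1 ->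
  forall eps : R, 0 < eps -> exists K0, forall k, (K0 <= k)%N -> rr v k <= eps.
Proof.
move=> hv0 hv1 eps heps.
have [m [d [hd hdm]]] := doeblin.
have hn : (0 < n)%N.
  case: (ltnP 0 n) => // hn; exfalso.
  move: hv1; rewrite big1 => [/eqP|i _]; first by rewrite eq_sym oner_eq0.
  by have := ltn_ord i; lia.
set q := 1 - n%:R * d.
have hq0 : 0 <= q.
  rewrite subr_ge0; apply: (@le_trans _ _ (\sum_j (Lz ^+ m) (Ordinal hn) j)); last by rewrite ((stoch_pow m Lz_stoch).2 (Ordinal hn)).
  have -> : n%:R * d = \sum_(j < n) d by rewrite sumr_const card_ord mulr_natl.
  by apply: ler_sum => j _; exact: hdm.
have hq1 : `|q| < 1.
  rewrite ger0_norm // /q ltrBlDr ltrDl; apply: mulr_gt0 => //.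
  by rewrite ltr0n.
have hgeo : forall a, rr v (a * m) <= 2 * q ^+ a.
  elim=> [|a IH]; first by rewrite mul0n expr0 mulr1; exact: rr0.
  rewrite mulSnr exprS mulrCA; apply: le_trans (rr_step hv1 (a * m) hdm) _.
  exact: ler_wpM2l.
have heps2 : 0 < eps / 2 by apply: divr_gt0.
have [N _ hN] := cvgr0_norm_lt (fun k => q ^+ k) (cvg_expr hq1) _ heps2.
exists (N * m)%N => k hk.
rewrite -(subnKC hk); apply: le_trans (rr_mono hv1 (N * m) (k - N * m)) _.
apply: le_trans (hgeo N) _.
have := hN N (leqnn N); rewrite /= ger0_norm ?exprn_ge0 // => h.
by rewrite -ler_pdivlMl // mulrC; apply: ltW.
Qed.


Lemma mxB_entry (A B : 'rV[R]_n) i j : (A - B) i j = A i j - B i j.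
Proof. by rewrite !mxE. Qed.

Lemma count_le (N K0 : nat) : \sum_(k < N) ((k < K0)%N%:R : R) <= K0%:R.
Proof.
have -> : \sum_(k < N) ((k < K0)%N%:R : R) = (minn N K0)%:R.
  elim: N => [|N IH]; first by rewrite big_ord0 min0n.
  rewrite big_ord_recr /= IH -natrD; congr (_%:R); lia.
by rewrite ler_nat geq_minr.
Qed.

Lemma unitv_nn (x : 'I_n) i : 0 <= unitv R x 0 i.
Proof. by rewrite mxE; case: (_ && _). Qed.

Lemma unitv_sum (x : 'I_n) : \sum_i unitv R x 0 i = 1.
Proof.
rewrite (bigD1 x) //= mxE !eqxx big1 ?addr0 // => j hj.
by rewrite mxE (negbTE hj) andbF.
Qed.

Lemma mix_conv (x : 'I_n) (eps : R) : 0 < eps -> exists T0 : R, 0 < T0 /\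
  forall t, T0 <= t -> vdist (unitv R x *m ctm P t) pi <= eps.
Proof.
move=> heps.
set v := unitv R x.
have hv0 := unitv_nn x; have hv1 := unitv_sum x.
have [K0 hK0] := decay_eps hv0 hv1 heps.
set Fk : R := (K0.+1)`!%:R.
have hFk : 0 < Fk by rewrite ltr0n fact_gt0.
exists (1 + K0%:R * Fk / eps); split.
  by apply: ltr_wpDr; [apply: divr_ge0; [apply: mulr_ge0|apply: ltW] | ].
move=> t ht.
have hK0F : 0 <= K0%:R * Fk / eps by apply: divr_ge0; [apply: mulr_ge0|apply: ltW].
set s := 2 * t.
have hs1 : 1 <= s by rewrite /s; lra.
have hs0 : 0 <= s by lra.
have hsbig : 2 * (K0%:R * Fk) <= eps * s.
  have : K0%:R * Fk / eps <= t by lra.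
  rewrite ler_pdivrMr // => h; rewrite /s; lra.
rewrite ctm_Lz -/s.
have /choice [G hG] := fun j => expm_pois_v Lz s v j.
have cd : forall j, (\sum_(k < N) ec s k * (v *m Lz ^+ k - pi) 0 j) @[N --> \oo]
    --> G j - expR s * pi 0 j.
  move=> j.
  rewrite (_ : (fun N => _) = (fun N => \sum_(k < N) s ^+ k / k`!%:R * (v *m Lz ^+ k) 0 j
     - (\sum_(k < N) ec s k) * pi 0 j)); last first.
    apply: funext => N; rewrite mulr_suml -sumrB; apply: eq_bigr => k _.
    by rewrite mxB_entry mulrBr.
  apply: cvgB; first exact: (hG j).1.
  by apply: cvgM; [exact: ec_cvg | exact: cvg_cst].
have cn : (\sum_j `|\sum_(k < N) ec s k * (v *m Lz ^+ k - pi) 0 j|) @[N --> \oo]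
    --> \sum_j `|G j - expR s * pi 0 j|.
  by apply: cvg_big => j; apply: cvg_norm; exact: cd.
have bnd : forall N, \sum_j `|\sum_(k < N) ec s k * (v *m Lz ^+ k - pi) 0 j|
    <= 2 * s ^+ K0 * K0%:R + eps * expR s.
  move=> N.
  apply: (@le_trans _ _ (\sum_(k < N) ec s k * rr v k)).
    apply: (@le_trans _ _ (\sum_j \sum_(k < N) ec s k * `|(v *m Lz ^+ k - pi) 0 j|)).
      apply: ler_sum => j _; apply: (le_trans (ler_norm_sum _ _ _)).
      apply: ler_sum => k _; by rewrite normrM (ger0_norm (ec_ge0 k hs0)).
    rewrite exchange_big /=; apply: ler_sum => k _; rewrite /rr mulr_sumr.
    by [].
  apply: (@le_trans _ _ (\sum_(k < N) (2 * s ^+ K0 * (k < K0)%N%:R + eps * ec s k))).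
    apply: ler_sum => k _.
    have he := ec_ge0 k hs0.
    case: (ltnP k K0) => hk.
      rewrite mulr1; apply: ler_wpDr; first by apply: mulr_ge0 => //; exact: ltW.
      apply: (@le_trans _ _ (ec s k * 2)).
        by apply: ler_wpM2l => //; exact: rr_le2.
      rewrite mulrC; apply: ler_wpM2l => //.
      apply: (@le_trans _ _ (s ^+ k)).
        rewrite /ec ler_pdivrMr ?ltr0n ?fact_gt0 //.
        by rewrite ler_peMr ?exprn_ge0 ?ler1n ?fact_gt0 //; lra.
      by apply: ler_weXn2l => //; exact: ltnW.
    rewrite (_ : false%:R = 0 :> R) // mulr0 add0r mulrC; apply: ler_wpM2r => //; exact: hK0.
  rewrite big_split /= -mulr_sumr -mulr_sumr; apply: lerD.
    by apply: ler_wpM2l; [apply: mulr_ge0 => //; apply: exprn_ge0; lra | exact: count_le].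
  apply: ler_wpM2l; [exact: ltW | exact: ec_partial_le; lra].
have hL := cvg_le cn bnd.
rewrite /vdist.
have e1 : forall j, `|(v *m expm (s *: (Lz - 1%:M))) 0 j - pi 0 j|
    = expR (- s) * `|G j - expR s * pi 0 j|.
  move=> j; rewrite (hG j).2.
  have -> : G j * expR (- s) - pi 0 j = expR (- s) * (G j - expR s * pi 0 j).
    by rewrite mulrBr mulrA (mulrC (expR (- s)) (expR s)) expRxMexpNx_1 mul1r mulrC.
  by rewrite normrM (ger0_norm (expR_ge0 (- s))).
under eq_bigr do rewrite e1.
rewrite -mulr_sumr.
have hX : s * (s ^+ K0 * expR (- s)) <= Fk.
  have := expR_ge1Dxn K0 (le_trans ler01 hs1).
  rewrite -/Fk => h.
  have h2 : s ^+ K0.+1 <= Fk * expR s.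
    rewrite -ler_pdivrMl // mulrC; lra.
  rewrite mulrA -exprS -(mulr1 Fk) -(expRxMexpNx_1 s) mulrA.
  apply: ler_wpM2r => //; exact: expR_ge0.
have hX0 : 0 <= s ^+ K0 * expR (- s) by apply: mulr_ge0; [apply: exprn_ge0; lra | exact: expR_ge0].
have hKX : K0%:R * (s ^+ K0 * expR (- s)) <= eps / 2.
  have hK : 0 <= K0%:R :> R by [].
  have : s * (K0%:R * (s ^+ K0 * expR (- s))) <= eps * s / 2 by nra.
  rewrite mulrC -ler_pdivlMr; last lra.
  by rewrite mulrAC mulfK //; lra.
have hes : 0 <= expR (- s) by exact: expR_ge0.
have := ler_wpM2l hes hL.
move=> h.
have e3 : expR (- s) * (2 * s ^+ K0 * K0%:R + eps * expR s) =
  2 * (K0%:R * (s ^+ K0 * expR (- s))) + eps * (expR s * expR (- s)) by ring.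
rewrite e3 expRxMexpNx_1 mulr1 in h.
lra.
Qed.

End Conv.

Section Fin.
Variables (R : realType) (n : nat).

Lemma splitC (f : 'I_n -> R) (A : {set 'I_n}) :
  \sum_i f i = \sum_(i in A) f i + \sum_(i in ~: A) f i.
Proof.
rewrite (bigID (fun i => i \in A)) /=; congr (_ + _).
by apply: eq_bigl => i; rewrite !inE.
Qed.

Lemma tv_lb (a b : 'rV[R]_n) (A : {set 'I_n}) :
  \sum_j a 0 j = \sum_j b 0 j ->
  \sum_(j in A) (b 0 j - a 0 j) <= vdist a b.
Proof.
move=> hab; rewrite /vdist.
have h0 : \sum_(j in A) (a 0 j - b 0 j) + \sum_(j in ~: A) (a 0 j - b 0 j) = 0.
  by rewrite -splitC sumrB hab subrr.
have e : \sum_(j in A) (b 0 j - a 0 j) = - \sum_(j in A) (a 0 j - b 0 j).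
  by rewrite -sumrN; apply: eq_bigr => j _; rewrite opprB.
have h1 : - \sum_(j in A) (a 0 j - b 0 j) <= \sum_(j in A) `|a 0 j - b 0 j|.
  rewrite -sumrN; apply: ler_sum => j _; rewrite -normrN; exact: ler_norm.
have h2 : \sum_(j in ~: A) (a 0 j - b 0 j) <= \sum_(j in ~: A) `|a 0 j - b 0 j|.
  by apply: ler_sum => j _; exact: ler_norm.
rewrite (splitC _ A) e; lra.
Qed.

Lemma unitv_mul (x : 'I_n) (C : 'M[R]_n) j : (unitv R x *m C) 0 j = C x j.
Proof. by rewrite /unitv -rowE mxE. Qed.

Lemma vdist_mix (m0 : 'rV[R]_n) (C : 'M[R]_n) (pi : 'rV[R]_n) (e : R) :
  (forall i, 0 <= m0 0 i) -> \sum_i m0 0 i = 1 ->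
  (forall x, vdist (unitv R x *m C) pi <= e) ->
  vdist (m0 *m C) pi <= e.
Proof.
move=> h0 h1 hx; rewrite /vdist.
have ej : forall j, (m0 *m C) 0 j - pi 0 j =
    \sum_x m0 0 x * ((unitv R x *m C) 0 j - pi 0 j).
  move=> j; rewrite mxE; under [RHS]eq_bigr do rewrite unitv_mul mulrBr.
  by rewrite sumrB -mulr_suml h1 mul1r.
under eq_bigr do rewrite ej.
apply: (@le_trans _ _ (2^-1 * \sum_j \sum_x m0 0 x * `|(unitv R x *m C) 0 j - pi 0 j|)).
  apply: ler_wpM2l; first by rewrite invr_ge0.
  apply: ler_sum => j _; apply: (le_trans (ler_norm_sum _ _ _)).
  by apply: ler_sum => x _; rewrite normrM ger0_norm.
rewrite exchange_big /= mulr_sumr.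
apply: (@le_trans _ _ (\sum_x m0 0 x * e)); last by rewrite -mulr_suml h1 mul1r.
apply: ler_sum => x _; rewrite -mulr_sumr mulrCA; apply: ler_wpM2l => //.
exact: hx.
Qed.

End Fin.

Section Main.
Variables (R : realType) (n : nat) (P : 'M[R]_n) (pi : 'rV[R]_n).
Hypotheses (hP : stoch P) (hpi0 : forall i, 0 <= pi 0 i)
  (hpi1 : \sum_i pi 0 i = 1) (hpiP : pi *m P = pi)
  (hirr : forall i j, exists k : nat, 0 < (P ^+ k) i j).

Lemma piSC S : piS pi S + piS pi (~: S) = 1.
Proof. by rewrite /piS -splitC hpi1. Qed.

Lemma condC S : conductanceS P pi (~: S) = conductanceS P pi S.
Proof. by rewrite /conductanceS finset.setCK addrC mulrAC. Qed.

Lemma cond_ge0 S : 0 < piS pi S < 1 -> 0 <= conductanceS P pi S.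
Proof.
case/andP=> h0 h1; rewrite /conductanceS.
have hC := piSC S.
apply: divr_ge0.
  apply: addr_ge0; apply: sumr_ge0 => i _; apply: sumr_ge0 => j _;
  apply: mulr_ge0 => //; exact: hP.1.
apply: mulr_ge0; last by lra.
by apply: mulr_ge0 => //; exact: ltW.
Qed.

Lemma mixing_at (eps t : R) x : 0 < eps -> mixtime P pi eps < t ->
  vdist (unitv R x *m ctm P t) pi <= eps.
Proof.
move=> heps ht.
have [T0 [hT0 hT0m]] := mix_conv hP hpi0 hpi1 hpiP hirr x heps.
set E := [set t : R | 0 < t /\
   forall t' : R, t <= t' -> vdist (unitv R x *m ctm P t') pi <= eps].
have hE : E T0 by split.
have hinf : has_inf E.
  split; first by exists T0.
  by exists 0 => y [hy _]; exact: ltW.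
have hle : mixtime_from P pi eps x <= mixtime P pi eps.
  exact: (le_bigmax _ (fun x => mixtime_from P pi eps x) x).
have hpos : 0 < t - inf E.
  rewrite subr_gt0; apply: le_lt_trans ht; exact: hle.
have [e [he0 he] het] := inf_adherent hpos hinf.
apply: he; rewrite addrC subrK in het; exact: ltW.
Qed.

Lemma key_half T (t : R) : 0 < piS pi T -> piS pi T <= 2^-1 -> 0 < t ->
  mixtime P pi (2 * expR 1)^-1 < t ->
  2^-1 - (2 * expR 1)^-1 <= t * conductanceS P pi T.
Proof.
move=> hT0 hT1 ht0 htau.
set eps := (2 * expR 1)^-1.
have heps : 0 < eps by rewrite invr_gt0 mulr_gt0 // expR_gt0.
have [hsum hout] := mut_props hP hpi0 hpiP hT0 (ltW ht0).
have hmix : vdist (mu0 pi T *m ctm P t) pi <= eps.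
  apply: vdist_mix.
  - exact: mu0_nn.
  - exact: mu0_sum.
  - by move=> x; exact: mixing_at.
have hlb := tv_lb (~: T) (etrans hsum (esym hpi1)).
rewrite sumrB -/(piS pi (~: T)) in hlb.
have hC := piSC T.
set a := piS pi T in hT0 hT1 hout hC *.
set b := piS pi (~: T) in hlb hC *.
set F := Fl P pi T in hout *.
set F' := \sum_(i in ~: T) \sum_(j in T) pi 0 i * P i j.
have hF' : 0 <= F'.
  apply: sumr_ge0 => i _; apply: sumr_ge0 => j _; apply: mulr_ge0 => //; exact: hP.1.
have hF : 0 <= F by exact: Fl_ge0.
set m := \sum_(j in ~: T) (mu0 pi T *m ctm P t) 0 j in hlb hout.
have h1 : b - eps <= t * (F / a) by lra.
have h2 : a * (b - eps) <= t * F.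
  by rewrite mulrA ler_pdivlMr // mulrC in h1.
rewrite /conductanceS -/F -/F' -/a -/b.
have hab : 0 < 2 * a * b by apply: mulr_gt0; [apply: mulr_gt0|]; lra.
rewrite mulrA ler_pdivlMr //.
have hepsa : 0 <= eps * a * (2 * b - 1) by apply: mulr_ge0; [apply: mulr_ge0|]; lra.
have h3 : 0 <= t * F' by apply: mulr_ge0 => //; exact: ltW.
have -> : \sum_(i in T) \sum_(j in ~: T) pi 0 i * P i j = F by [].
nra.
Qed.

End Main.

Unset Implicit Arguments.
Local Close Scope classical_set_scope.

Theorem theorem18 (R : realType) (n : nat) (P : 'M[R]_n) (pi : 'rV[R]_n) :
  ergodic P -> stationary P pi ->
  forall S : {set 'I_n}, 0 < piS pi S < 1 ->
    (2^-1 - (2 * expR 1)^-1) / mixtime P pi (2 * expR 1)^-1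
      <= conductanceS P pi S.
Proof.
move=> [[hP0 hP1] [hirr _]] [hpi0 [hpi1 hpiP]] S hS.
have hP : stoch P by split.
have he : 2 <= expR 1 :> R by have := expR_ge1Dx (1 : R); lra.
have hc : 0 <= 2^-1 - (2 * expR 1)^-1 :> R.
  rewrite subr_ge0 invfM -[leRHS]mulr1; apply: ler_wpM2l; first by rewrite invr_ge0.
  rewrite invf_le1; lra.
set c := 2^-1 - (2 * expR 1)^-1 in hc *.
set tau := mixtime P pi (2 * expR 1)^-1.
have key : forall t, tau < t -> 0 < t -> c <= t * conductanceS P pi S.
  move=> t htau ht.
  have hC := piSC hpi1 S.
  case/andP: hS => hS0 hS1.
  have [hle|hgt] := lerP (piS pi S) 2^-1.
    exact: (key_half hP hpi0 hpi1 hpiP hirr).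
  rewrite -condC; apply: (key_half hP hpi0 hpi1 hpiP hirr) => //; lra.
have hphi := cond_ge0 hP hpi0 hpi1 hS.
have [htau|htau] := lerP tau 0.
  apply: le_trans hphi; apply: mulr_ge0_le0 => //; by rewrite invr_le0.
rewrite ler_pdivrMr //.
apply/ler_addgt0Pr => e he0.
set Phi := conductanceS P pi S in key hphi *.
set d := e / (Phi + 1).
have hd0 : 0 < d by apply: divr_gt0 => //; lra.
have hd : d * (Phi + 1) = e by rewrite /d divfK //; lra.
have h1 : tau < tau + d by lra.
have h2 : 0 < tau + d by lra.
have := key (tau + d) h1 h2.
nra.
Qed.
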